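(* Let $d\ge1$, $s>0$. Suppose that to every $n\in\mathbb{N}_0$ and every cube $Q\subset\mathbb{R}^d$ there is associated a number $E_n(Q)\ge 0$ such that: (i) $E_n(\lambda Q)=\lambda^{-2s}E_n(Q)$ for all $\lambda>0$; (ii) $E_n(Q+\mathbf{x})=E_n(Q)$ for all $\mathbf{x}\in\mathbb{R}^d$; (iii) for any finite collection of disjoint cubes $Q_1,\dots,Q_J$ whose union is a cube, $E_n(\bigcup_j Q_j)\ge \min\{\sum_{j=1}^J E_{n_j}(Q_j): (n_j)\in\mathbb{N}_0^J,\ \sum_j n_j=n\}$; (iv) there exists $q\ge 0$ such that $E_n(Q)>0$ for all $n\ge q$ and all cubes $Q$. Then there is a constant $C>0$ independent of $n$ and $Q$ such that $E_n(Q)\ge C|Q|^{-2s/d}n^{1+2s/d}$ for all integers $n\ge q$ and all cubes $Q$.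
   Context: Cubes are (axis-parallel) cubes in $\mathbb{R}^d$; $\lambda Q$ denotes the dilated cube, $|Q|$ its volume. Disjointness of cubes is understood up to boundaries (measure-zero overlaps). *)

(* Defs.v *)
From Stdlib Require Import Reals Lra.
Open Scope R_scope.

(* Points of R^d are represented as functions nat -> R; only coordinates
   i < d are meaningful. A cube is given by its lower corner a and its side
   length l (> 0): the closed cube  prod_{i<d} [a i, a i + l]. *)
Definition point := nat -> R.

Definition in_cube (d : nat) (a : point) (l : R) (x : point) : Prop :=
  forall i, (i < d)%nat -> a i <= x i <= a i + l.

Definition in_cube_int (d : nat) (a : point) (l : R) (x : point) : Prop :=
  forall i, (i < d)%nat -> a i < x i < a i + l.

(* Corner of the dilated cube lambda*Q (dilation about the centre of Q);
   its side is lambda * l. *)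
Definition dil_corner (a : point) (l lam : R) : point :=
  fun i => a i + l / 2 - lam * l / 2.

Definition tr_corner (a x : point) : point := fun i => a i + x i.

Fixpoint rsum (f : nat -> R) (J : nat) : R :=
  match J with O => 0 | S J' => rsum f J' + f J' end.

Fixpoint nsum (f : nat -> nat) (J : nat) : nat :=
  match J with O => O | S J' => (nsum f J' + f J')%nat end.

(* Q_1..Q_J (corners as j, sides ls j, j < J) are pairwise disjoint up to
   boundaries (disjoint interiors) and their union is the cube Q = (a,l). *)
Definition cube_partition (d : nat) (J : nat) (as_ : nat -> point) (ls : nat -> R)
    (a : point) (l : R) : Prop :=
  (forall j, (j < J)%nat -> 0 < ls j) /\
  (forall j k x, (j < J)%nat -> (k < J)%nat -> j <> k ->
       ~ (in_cube_int d (as_ j) (ls j) x /\ in_cube_int d (as_ k) (ls k) x)) /\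
  (forall x, in_cube d a l x <-> exists j, (j < J)%nat /\ in_cube d (as_ j) (ls j) x).

(* Main.v *)
Require Import Defs.
From Stdlib Require Import Reals Lra Lia Arith ZArith Classical FunctionalExtensionality.
Open Scope R_scope.

Lemma nat_big (r : R) : exists N : nat, r < INR N.
Proof.
  destruct (archimed r) as [H _].
  exists (Z.to_nat (up r)).
  destruct (Z_le_gt_dec 0 (up r)) as [Hz|Hz].
  - rewrite INR_IZR_INZ, Z2Nat.id; [lra | lia].
  - assert (IZR (up r) < 0) by (apply IZR_lt; lia). simpl.
    replace (Z.to_nat (up r)) with 0%nat by lia. simpl; lra.
Qed.

Lemma tangent (x m a : R) : 0 < x -> 0 < m -> 0 <= a ->
  Rpower m a * ((1 + a) * x - a * m) <= x * Rpower x a.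
Proof.
  intros Hx Hm Ha.
  assert (Hl : ln m - ln x <= m / x - 1).
  { assert (Hq : 0 < m / x) by (apply Rdiv_lt_0_compat; lra).
    pose proof (exp_ineq1_le (ln (m / x))) as H1. rewrite exp_ln in H1 by lra.
    unfold Rdiv in *. rewrite ln_mult in H1 by (try apply Rinv_0_lt_compat; lra).
    rewrite ln_Rinv in H1 by lra. lra. }
  assert (He : Rpower x a = Rpower m a * exp (a * (ln x - ln m))).
  { unfold Rpower. rewrite <- exp_plus. f_equal; ring. }
  pose proof (exp_ineq1_le (a * (ln x - ln m))) as H2.
  assert (Hpm : 0 < Rpower m a) by (unfold Rpower; apply exp_pos).
  assert (H3 : a * (ln x - ln m) >= a * (1 - m / x)).
  { apply Rle_ge, Rmult_le_compat_l; lra. }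
  assert (H4 : x * (1 + a * (1 - m/x)) = (1 + a) * x - a * m) by (field; lra).
  rewrite He, <- H4.
  assert (H5 : 1 + a * (1 - m / x) <= exp (a * (ln x - ln m))) by lra.
  assert (0 <= x * Rpower m a) by (apply Rmult_le_pos; lra).
  replace (x * (Rpower m a * exp (a * (ln x - ln m)))) with (x * Rpower m a * exp (a * (ln x - ln m))) by ring.
  replace (Rpower m a * (x * (1 + a * (1 - m / x)))) with (x * Rpower m a * (1 + a * (1 - m / x))) by ring.
  apply Rmult_le_compat_l; lra.
Qed.
Lemma rsum_le f g J : (forall j, (j < J)%nat -> f j <= g j) -> rsum f J <= rsum g J.
Proof. induction J; simpl; intros H; [lra|]. pose proof (H J ltac:(lia)).
  assert (rsum f J <= rsum g J) by (apply IHJ; intros; apply H; lia). lra. Qed.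

Lemma rsum_term f J j0 : (forall j, (j < J)%nat -> 0 <= f j) -> (j0 < J)%nat -> f j0 <= rsum f J.
Proof. induction J; simpl; intros H Hj; [lia|].
  assert (0 <= rsum f J).
  { clear IHJ Hj. induction J; simpl; [lra|]. pose proof (H J ltac:(lia)).
    assert (0 <= rsum f J) by (apply IHJ; intros; apply H; lia). lra. }
  destruct (Nat.eq_dec j0 J) as [->|Hn]. { lra. }
  assert (f j0 <= rsum f J) by (apply IHJ; [intros; apply H; lia| lia]).
  pose proof (H J ltac:(lia)). lra. Qed.

Lemma rsum_lin A B (ns : nat -> nat) J :
  rsum (fun j => A * INR (ns j) + B) J = A * INR (nsum ns J) + B * INR J.
Proof. induction J; cbn [rsum nsum]; [simpl; ring|]. rewrite IHJ, plus_INR, (S_INR J). ring. Qed.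

Lemma rsum_scal K f J : rsum (fun j => K * f j) J = K * rsum f J.
Proof. induction J; simpl; [ring|]. rewrite IHJ. ring. Qed.

Lemma nsum_ge ns J j : (j < J)%nat -> (ns j <= nsum ns J)%nat.
Proof. induction J; simpl; intros; [lia|]. destruct (Nat.eq_dec j J); [subst; lia|].
  specialize (IHJ ltac:(lia)). lia. Qed.

Fixpoint cm (r : nat -> R) (k : nat) : R :=
  match k with O => r O | S k' => Rmin (cm r k') (r (S k')) end.

Lemma cm_pos r k : (forall n, 0 < r n) -> 0 < cm r k.
Proof. intros H; induction k; simpl; [apply H|]. unfold Rmin; destruct Rle_dec; auto. Qed.

Lemma cm_le r k j : (j <= k)%nat -> cm r k <= r j.
Proof. induction k; intros Hj; simpl.
  - replace j with 0%nat by lia. lra.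
  - destruct (Nat.eq_dec j (S k)) as [->|].
    + apply Rmin_r.
    + eapply Rle_trans; [apply Rmin_l| apply IHk; lia]. Qed.

Lemma main_abs (e : nat -> R) (q M : nat) (a K : R) :
  0 < a -> (1 <= M)%nat -> 1 < K ->
  (forall x, 0 < x -> K * Rpower (x / INR M) a = Rpower x a) ->
  (forall n, 0 <= e n) -> (forall n, (q <= n)%nat -> 0 < e n) ->
  (forall n, exists ns, nsum ns M = n /\ K * rsum (fun j => e (ns j)) M <= e n) ->
  exists c, 0 < c /\ forall n, (q <= n)%nat -> c * (INR n * Rpower (INR n) a) <= e n.
Proof.
  intros Ha HM HK HKM He0 Hep Hsplit.
  destruct (nat_big (INR M * (1+a) * INR q / a)) as [N0 HN0].
  set (r := fun n => if andb (q <=? n)%nat (1 <=? n)%nat then e n / (INR n * Rpower (INR n) a) else 1).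
  assert (Hfp : forall n, (1 <= n)%nat -> 0 < INR n * Rpower (INR n) a).
  { intros n Hn. apply Rmult_lt_0_compat. apply lt_0_INR; lia. unfold Rpower; apply exp_pos. }
  assert (Hr : forall n, 0 < r n).
  { intros n. unfold r. destruct (q <=? n)%nat eqn:E1; destruct (1 <=? n)%nat eqn:E2; simpl; try lra.
    apply Nat.leb_le in E1, E2. apply Rdiv_lt_0_compat; auto. }
  exists (cm r N0). split; [apply cm_pos; auto|].
  set (c := cm r N0).
  assert (Hc : 0 < c) by (apply cm_pos; auto).
  assert (HMr : 0 < INR M) by (apply lt_0_INR; lia).
  intros n; induction n as [n IH] using (well_founded_induction lt_wf); intros Hqn.
  destruct (le_lt_dec n N0) as [HnN|HnN].
  - destruct n as [|n'].
    + simpl. rewrite Rmult_0_l, Rmult_0_r. apply He0.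
    + assert (Hrn : r (S n') = e (S n') / (INR (S n') * Rpower (INR (S n')) a)).
      { unfold r. replace ((q <=? S n')%nat) with true by (symmetry; apply Nat.leb_le; lia).
        replace ((1 <=? S n')%nat) with true by (symmetry; apply Nat.leb_le; lia). reflexivity. }
      pose proof (cm_le r N0 (S n') HnN) as Hle. fold c in Hle. rewrite Hrn in Hle.
      pose proof (Hfp (S n') ltac:(lia)) as Hf.
      apply Rmult_le_compat_r with (r := INR (S n') * Rpower (INR (S n')) a) in Hle; [|lra].
      unfold Rdiv in Hle. rewrite Rmult_assoc, Rinv_l, Rmult_1_r in Hle; lra.
  - destruct (Hsplit n) as [ns [Hns Hsum]].
    assert (Hn0 : 0 < INR n) by (apply lt_0_INR; lia).
    set (m := INR n / INR M).
    assert (Hm : 0 < m) by (apply Rdiv_lt_0_compat; lra).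
    assert (HmM : m * INR M = INR n) by (unfold m; field; lra).
    assert (HN0n : INR N0 < INR n) by (apply lt_INR; lia).
    assert (Ham : (1 + a) * INR q < a * m).
    { assert (INR M * (1 + a) * INR q < a * INR n).
      { assert (INR M * (1 + a) * INR q / a * a = INR M * (1 + a) * INR q) by (field; lra).
        assert (INR M * (1 + a) * INR q / a * a < INR n * a) by (apply Rmult_lt_compat_r; lra). lra. }
      unfold m. apply Rmult_lt_reg_r with (r := INR M); auto.
      replace (a * (INR n / INR M) * INR M) with (a * INR n) by (field; lra). lra. }
    assert (Hlt : forall j, (j < M)%nat -> (ns j < n)%nat).
    { intros j Hj. pose proof (nsum_ge ns M j Hj) as Hg. rewrite Hns in Hg.
      destruct (Nat.eq_dec (ns j) n) as [Heq|]; [|lia]. exfalso.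
      pose proof (rsum_term (fun j => e (ns j)) M j (fun j _ => He0 (ns j)) Hj) as Ht.
      simpl in Ht. rewrite Heq in Ht. pose proof (Hep n Hqn). nra. }
    set (P := Rpower m a).
    assert (HP : 0 < P) by (unfold P, Rpower; apply exp_pos).
    assert (Hterm : forall j, (j < M)%nat ->
      (c * P * (1 + a)) * INR (ns j) + (- (c * P * a * m)) <= e (ns j)).
    { intros j Hj. replace ((c * P * (1 + a)) * INR (ns j) + (- (c * P * a * m)))
        with (c * (P * ((1 + a) * INR (ns j) - a * m))) by ring.
      destruct (le_lt_dec q (ns j)) as [Hq|Hq].
      - pose proof (IH (ns j) (Hlt j Hj) Hq) as Hi.
        destruct (Nat.eq_dec (ns j) 0) as [H0|H0].
        + rewrite H0. simpl. pose proof (He0 0%nat).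
          assert (c * (P * ((1 + a) * 0 - a * m)) <= 0).
          { replace (c * (P * ((1 + a) * 0 - a * m))) with (- (c * P * a * m)) by ring.
            assert (0 < c * P * a * m) by (apply Rmult_lt_0_compat; [apply Rmult_lt_0_compat; [apply Rmult_lt_0_compat|]|]; assumption). lra. }
          lra.
        + assert (Hx : 0 < INR (ns j)) by (apply lt_0_INR; lia).
          pose proof (tangent (INR (ns j)) m a Hx Hm ltac:(lra)) as Ht. fold P in Ht.
          apply Rle_trans with (c * (INR (ns j) * Rpower (INR (ns j)) a)); auto.
          apply Rmult_le_compat_l; lra.
      - assert (INR (ns j) <= INR q) by (apply le_INR; lia).
        assert ((1 + a) * INR (ns j) - a * m < 0) by nra.
        assert (c * (P * ((1 + a) * INR (ns j) - a * m)) <= 0).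
        { assert (0 < c * P) by (apply Rmult_lt_0_compat; auto). nra. }
        pose proof (He0 (ns j)). lra. }
    pose proof (rsum_le _ _ M Hterm) as Hs.
    rewrite rsum_lin, Hns in Hs.
    assert (Heq : c * P * (1 + a) * INR n + - (c * P * a * m) * INR M = c * P * INR n).
    { replace (- (c * P * a * m) * INR M) with (- (c * P * a * (m * INR M))) by ring.
      rewrite HmM. ring. }
    rewrite Heq in Hs.
    assert (HK' : K * P = Rpower (INR n) a) by (unfold P, m; apply HKM; auto).
    assert (K * (c * P * INR n) <= K * rsum (fun j => e (ns j)) M) by (apply Rmult_le_compat_l; lra).
    replace (c * (INR n * Rpower (INR n) a)) with (K * (c * P * INR n)).
    + lra.
    + rewrite <- HK'. ring.
Qed.
Fixpoint code (b : nat -> bool) (i : nat) : nat :=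
  match i with O => O | S i' => (code b i' + Nat.b2n (b i') * 2 ^ i')%nat end.

Lemma code_spec b i : (code b i < 2 ^ i)%nat /\
  forall k, (k < i)%nat -> Nat.testbit (code b i) k = b k.
Proof.
  induction i as [|i [IH1 IH2]]; simpl.
  - split; [lia| intros; lia].
  - assert (Hp : (2 ^ i <> 0)%nat) by (apply Nat.pow_nonzero; lia).
    split.
    + destruct (b i); simpl; lia.
    + intros k Hk. destruct (Nat.eq_dec k i) as [->|Hki].
      * assert (Hb : Nat.b2n (Nat.testbit (code b i + Nat.b2n (b i) * 2 ^ i) i) = Nat.b2n (b i)).
        { rewrite Nat.testbit_spec', Nat.div_add by exact Hp.
          rewrite Nat.div_small by exact IH1. destruct (b i); reflexivity. }
        destruct (Nat.testbit _ i), (b i); simpl in Hb; congruence.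
      * rewrite <- (Nat.mod_pow2_bits_low _ i k) by lia.
        rewrite Nat.Div0.mod_add, Nat.mod_small by exact IH1. apply IH2; lia.
Qed.

Definition cor (j : nat) : point := fun i => if Nat.testbit j i then 1/2 else 0.

Lemma part d : cube_partition d (2 ^ d) cor (fun _ => 1/2) (fun _ => 0) 1.
Proof.
  split; [intros; lra|]. split.
  - intros j k x Hj Hk Hjk [H1 H2].
    assert (Hex : exists i, (i < d)%nat /\ Nat.testbit j i <> Nat.testbit k i).
    { destruct (classic (exists i, (i < d)%nat /\ Nat.testbit j i <> Nat.testbit k i)) as [|Hn]; auto.
      exfalso. apply Hjk. apply Nat.bits_inj. intros i.
      rewrite <- (Nat.mod_small j (2^d)), <- (Nat.mod_small k (2^d)) by assumption.
      destruct (le_lt_dec d i).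
      - rewrite !Nat.mod_pow2_bits_high by lia. reflexivity.
      - rewrite !Nat.mod_pow2_bits_low by lia.
        destruct (Bool.bool_dec (Nat.testbit j i) (Nat.testbit k i)); auto.
        exfalso; apply Hn; eauto. }
    destruct Hex as [i [Hi Hne]].
    specialize (H1 i Hi); specialize (H2 i Hi). unfold cor in *.
    destruct (Nat.testbit j i), (Nat.testbit k i); try congruence; lra.
  - intros x. split.
    + intros Hx.
      set (b := fun i => if Rlt_dec (x i) (1/2) then false else true).
      destruct (code_spec b d) as [H1 H2].
      exists (code b d). split; [exact H1|].
      intros i Hi. specialize (Hx i Hi). unfold cor. rewrite H2 by exact Hi.
      unfold b. destruct (Rlt_dec (x i) (1/2)); lra.
    + intros [j [Hj Hx]] i Hi. specialize (Hx i Hi). unfold cor in Hx.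
      destruct (Nat.testbit j i); lra.
Qed.

Theorem mainTheorem3 (d : nat) (s : R) (E : nat -> point -> R -> R) (q : nat) :
  (1 <= d)%nat -> 0 < s ->
  (forall n a l, 0 < l -> 0 <= E n a l) ->
  (* (i) scaling *)
  (forall n a l lam, 0 < l -> 0 < lam ->
     E n (dil_corner a l lam) (lam * l) = Rpower lam (- (2 * s)) * E n a l) ->
  (* (ii) translation invariance *)
  (forall n a l x, 0 < l -> E n (tr_corner a x) l = E n a l) ->
  (* (iii) superadditivity over partitions into cubes *)
  (forall n J as_ ls a l, 0 < l -> cube_partition d J as_ ls a l ->
     exists ns : nat -> nat, nsum ns J = n /\
       rsum (fun j => E (ns j) (as_ j) (ls j)) J <= E n a l) ->
  (* (iv) positivity for n >= q *)
  (forall n a l, (q <= n)%nat -> 0 < l -> 0 < E n a l) ->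
  exists C, 0 < C /\
    forall n a l, (q <= n)%nat -> 0 < l ->
      C * Rpower (l ^ d) (- (2 * s / INR d)) * (INR n * Rpower (INR n) (2 * s / INR d))
        <= E n a l.
Proof.
  intros Hd Hs Hnn Hdil Htr Hpart Hpos.
  set (a0 := fun _ : nat => 0).
  set (e := fun n => E n a0 1).
  assert (Hscale : forall n a l, 0 < l -> E n a l = Rpower l (- (2 * s)) * e n).
  { intros n a l Hl. pose proof (Hdil n a0 1 l Rlt_0_1 Hl) as H1. rewrite Rmult_1_r in H1.
    pose proof (Htr n (dil_corner a0 1 l) l (fun i => a i - dil_corner a0 1 l i) Hl) as H2.
    replace (tr_corner (dil_corner a0 1 l) (fun i => a i - dil_corner a0 1 l i)) with a in H2.
    - rewrite H2, H1. reflexivity.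
    - apply functional_extensionality; intros i; unfold tr_corner; ring. }
  assert (Hdr : 0 < INR d) by (apply lt_0_INR; lia).
  set (al := 2 * s / INR d).
  set (K := Rpower (1/2) (- (2 * s))).
  assert (Hln2 : 0 < ln 2).
  { rewrite <- ln_1. apply ln_increasing; lra. }
  assert (Hhalf : ln (1/2) = - ln 2).
  { replace (1/2) with (/2) by field. apply ln_Rinv; lra. }
  assert (HM : (1 <= 2 ^ d)%nat).
  { pose proof (Nat.pow_nonzero 2 d ltac:(lia)). lia. }
  destruct (main_abs e q (2 ^ d) al K) as [c [Hc Hmain]].
  - unfold al. apply Rdiv_lt_0_compat; lra.
  - exact HM.
  - unfold K, Rpower. rewrite Hhalf. rewrite <- exp_0. apply exp_increasing. nra.
  - intros x Hx. unfold K, Rpower. rewrite <- exp_plus. f_equal.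
    rewrite pow_INR, Hhalf. replace (INR 2) with 2 by (simpl; lra).
    assert (Hl2 : ln (x / 2 ^ d) = ln x - INR d * ln 2).
    { unfold Rdiv. rewrite ln_mult, ln_Rinv, ln_pow.
      - ring.
      - lra.
      - apply pow_lt; lra.
      - exact Hx.
      - apply Rinv_0_lt_compat, pow_lt; lra. }
    rewrite Hl2. unfold al. field. lra.
  - intros n. apply Hnn; lra.
  - intros n Hn. apply Hpos; [exact Hn | lra].
  - intros n. destruct (Hpart n (2 ^ d)%nat cor (fun _ => 1/2) a0 1 Rlt_0_1 (part d)) as [ns [H1 H2]].
    exists ns. split; auto.
    replace (rsum (fun j => E (ns j) (cor j) (1 / 2)) (2 ^ d)) with
      (rsum (fun j => K * e (ns j)) (2 ^ d)) in H2.
    + rewrite rsum_scal in H2. exact H2.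
    + f_equal. apply functional_extensionality; intros j. rewrite (Hscale _ _ (1/2)) by lra. reflexivity.
  - exists c. split; auto. intros n a l Hn Hl.
    rewrite (Hscale n a l Hl).
    rewrite <- (Rpower_pow d l Hl), Rpower_mult.
    replace (INR d * - al) with (- (2 * s)) by (unfold al; field; lra).
    pose proof (Hmain n Hn).
    assert (0 < Rpower l (- (2 * s))) by (unfold Rpower; apply exp_pos).
    replace (c * Rpower l (- (2 * s)) * (INR n * Rpower (INR n) al)) with
      (Rpower l (- (2 * s)) * (c * (INR n * Rpower (INR n) al))) by ring.
    apply Rmult_le_compat_l; lra.
Qed.
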